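(* Let $t>0$, $n\geq 3$, and let $\varphi_1,\dots,\varphi_n>0$ with $\varphi_1+\dots+\varphi_n=t$ (indices cyclic mod $n$). Let $\overline{\mathcal{P}}(\varphi_1,\dots,\varphi_n)\subset\mathbb{R}^n$ be the cone of support vectors and $\mathcal{P}(\varphi_1,\dots,\varphi_n)$ its intersection with the unit sphere of the Euclidean space $(\mathbb{R}^n,\operatorname{coarea})$. Then $\mathcal{P}(\varphi_1,\dots,\varphi_n)$ is a spherical simplex whose facets are contained in the hyperplanes $\{\ell_k=0\}$, $k=1,\dots,n$, where $\ell_k(h)=\frac{h_k\cosh\varphi_{k-1}-h_{k-1}}{\sinh\varphi_{k-1}}+\frac{h_k\cosh\varphi_k-h_{k+1}}{\sinh\varphi_k}$, and it is an acute spherical orthoscheme: the facets $\{\ell_k=0\}$ and $\{\ell_{k+1}=0\}$ meet at an acute interior dihedral angle $\alpha_k$ with $$\cos\alpha_k=\sqrt{\frac{\sinh\varphi_{k-1}\sinh\varphi_{k+1}}{\sinh(\varphi_{k-1}+\varphi_k)\sinh(\varphi_k+\varphi_{k+1})}},$$ and any two facets $\{\ell_k=0\}$, $\{\ell_j=0\}$ with $j\not\equiv k\pm1 \pmod n$ are orthogonal.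
   Context: Lorentz plane: $\mathbb{R}^2$ with $\langle x,y\rangle_1=x_1y_1-x_2y_2$; $\mathbb{H}=\{x:\langle x,x\rangle_1=-1,x_2>0\}$; $H_s=\begin{pmatrix}\cosh s&\sinh s\\ \sinh s&\cosh s\end{pmatrix}$. A $t$-convex polygon is the intersection over $k\in\mathbb{Z}$, $i=1,\dots,n$ of the half-planes $\{x:\langle x,H_t^k\eta_i\rangle_1\le -h_i\}$ for pairwise distinct $\eta_i\in\mathbb{H}$ and $h_i>0$, where each $\eta_i$ is the inward normal of a genuine edge; $(h_1,\dots,h_n)$ is its support vector. The cone of support vectors $\overline{\mathcal{P}}(\varphi_1,\dots,\varphi_n)$ is, for a fixed $\eta\in\mathbb{H}$, the set of support vectors of $t$-convex polygons whose fundamental edges have inward unit normals $\eta_1=\eta$, $\eta_{i+1}=H_{\varphi_i}\eta_i$ ($i=1,\dots,n$; note $\eta_{n+1}=H_t\eta_1$); up to linear isomorphism it does not depend on $\eta$, and $\ell_k(h)$ is the Lorentzian length of the $k$-th fundamental edge. The coarea form is $\operatorname{coarea}(h,k)=\frac12\sum_{i=1}^n\big(h_i\frac{k_i\cosh\varphi_{i-1}-k_{i-1}}{\sinh\varphi_{i-1}}+h_i\frac{k_i\cosh\varphi_i-k_{i+1}}{\sinh\varphi_i}\big)$ (indices mod $n$), a positive definite symmetric bilinear form on $\mathbb{R}^n$. An acute spherical orthoscheme is a spherical simplex each of whose facets makes an acute dihedral angle with exactly two other facets and is orthogonal to all remaining facets. *)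

(* Defs.v *)
(* concrete reals R. Vectors of R^n are functions nat -> R,
   only the entries 0..n-1 matter; index k here corresponds to index k+1 of
   the paper, and cyclic index arithmetic is done mod n. *)
From Stdlib Require Import Reals Lra ZArith.
Open Scope R_scope.

Fixpoint rsum (n : nat) (f : nat -> R) : R :=
  match n with O => 0 | S m => rsum m f + f m end.

Definition prv (n k : nat) : nat := ((k + n - 1) mod n)%nat.
Definition nxt (n k : nat) : nat := ((k + 1) mod n)%nat.

Definition mink (x y : R * R) : R := fst x * fst y - snd x * snd y.
Definition in_H (x : R * R) : Prop := mink x x = -1 /\ 0 < snd x.
Definition boost (s : R) (x : R * R) : R * R :=
  (cosh s * fst x + sinh s * snd x, sinh s * fst x + cosh s * snd x).

(* fundamental inward normals: eta_0 = eta, eta_{i+1} = H_{phi_i} eta_i,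
   i.e. eta_i = H_{phi_0 + ... + phi_{i-1}} eta *)
Definition fnormal (phi : nat -> R) (eta : R * R) (i : nat) : R * R :=
  boost (rsum i phi) eta.

(* the t-convex set: intersection over k in Z, i < n of the half-planes
   { x | <x, H_t^k eta_i>_1 <= - h_i }  (H_t^k = H_{k t}) *)
Definition tpolygon (n : nat) (t : R) (phi : nat -> R) (eta : R * R)
    (h : nat -> R) (x : R * R) : Prop :=
  forall (k : Z) (i : nat), (i < n)%nat ->
    mink x (boost (IZR k * t) (fnormal phi eta i)) <= - h i.

Definition genuine_edge (K : R * R -> Prop) (nu : R * R) (c : R) : Prop :=
  exists x y : R * R, x <> y /\ K x /\ K y /\ mink x nu = - c /\ mink y nu = - c.

Definition support_cone (n : nat) (t : R) (phi : nat -> R) (eta : R * R)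
    (h : nat -> R) : Prop :=
  (forall i j, (i < n)%nat -> (j < n)%nat -> i <> j ->
      fnormal phi eta i <> fnormal phi eta j) /\
  (forall i, (i < n)%nat -> 0 < h i) /\
  (forall i, (i < n)%nat ->
      genuine_edge (tpolygon n t phi eta h) (fnormal phi eta i) (h i)).

Definition ell (n : nat) (phi : nat -> R) (k : nat) (h : nat -> R) : R :=
  (h k * cosh (phi (prv n k)) - h (prv n k)) / sinh (phi (prv n k)) +
  (h k * cosh (phi k) - h (nxt n k)) / sinh (phi k).

Definition coarea (n : nat) (phi : nat -> R) (h k : nat -> R) : R :=
  / 2 * rsum n (fun i =>
    h i * ((k i * cosh (phi (prv n i)) - k (prv n i)) / sinh (phi (prv n i))) +
    h i * ((k i * cosh (phi i) - k (nxt n i)) / sinh (phi i))).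

Definition sphere_part (n : nat) (t : R) (phi : nat -> R) (eta : R * R)
    (h : nat -> R) : Prop :=
  support_cone n t phi eta h /\ coarea n phi h h = 1.

Definition lin_indep_forms (n : nat) (f : nat -> (nat -> R) -> R) : Prop :=
  forall c : nat -> R,
    (forall h : nat -> R, rsum n (fun k => c k * f k h) = 0) ->
    forall k, (k < n)%nat -> c k = 0.

(* S is the (open) spherical simplex of the unit B-sphere cut out by the n
   linearly independent forms f_0..f_{n-1}: its facets lie in {f_k = 0},
   eps_k = +-1 selects the side of each hyperplane on which S lies. *)
Definition spherical_simplex_facets (n : nat)
    (B : (nat -> R) -> (nat -> R) -> R) (S : (nat -> R) -> Prop)
    (f : nat -> (nat -> R) -> R) (eps : nat -> R) : Prop :=
  lin_indep_forms n f /\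
  (forall k, (k < n)%nat -> eps k = 1 \/ eps k = -1) /\
  (forall h : nat -> R, S h <-> (B h h = 1 /\ forall k, (k < n)%nat -> 0 < eps k * f k h)).

Definition inward_normal (B : (nat -> R) -> (nat -> R) -> R)
    (f : (nat -> R) -> R) (eps : R) (N : nat -> R) : Prop :=
  forall x : nat -> R, B N x = eps * f x.

Definition dihedral_cos (B : (nat -> R) -> (nat -> R) -> R) (Nk Nj : nat -> R) : R :=
  - B Nk Nj / sqrt (B Nk Nk * B Nj Nj).

(* Main.v *)
Require Import Defs.
From Stdlib Require Import Reals Lra Lia ZArith.
Open Scope R_scope.
Lemma sinh_add a b : sinh (a + b) = sinh a * cosh b + cosh a * sinh b.
Proof.
  unfold sinh, cosh. rewrite Ropp_plus_distr, !exp_plus, !exp_Ropp.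
  assert (exp a <> 0) by (apply Rgt_not_eq, exp_pos).
  assert (exp b <> 0) by (apply Rgt_not_eq, exp_pos).
  field; auto.
Qed.
Lemma cosh_add a b : cosh (a + b) = cosh a * cosh b + sinh a * sinh b.
Proof.
  unfold sinh, cosh. rewrite Ropp_plus_distr, !exp_plus, !exp_Ropp.
  assert (exp a <> 0) by (apply Rgt_not_eq, exp_pos).
  assert (exp b <> 0) by (apply Rgt_not_eq, exp_pos).
  field; auto.
Qed.
Lemma cosh_sinh a : cosh a * cosh a - sinh a * sinh a = 1.
Proof.
  unfold sinh, cosh. rewrite !exp_Ropp.
  assert (exp a <> 0) by (apply Rgt_not_eq, exp_pos).
  field; auto.
Qed.
Lemma sinh_opp a : sinh (- a) = - sinh a.
Proof. unfold sinh. rewrite Ropp_involutive. field. Qed.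
Lemma cosh_opp a : cosh (- a) = cosh a.
Proof. unfold cosh. rewrite Ropp_involutive. field. Qed.
Lemma sinh_0' : sinh 0 = 0.
Proof. unfold sinh. rewrite Ropp_0, exp_0. field. Qed.
Lemma cosh_0' : cosh 0 = 1.
Proof. unfold cosh. rewrite Ropp_0, exp_0. field. Qed.
Lemma exp_gt1 a : 0 < a -> 1 < exp a.
Proof. intro. rewrite <- exp_0. apply exp_increasing. lra. Qed.
Lemma sinh_pos a : 0 < a -> 0 < sinh a.
Proof.
  intro H. pose proof (exp_gt1 a H). unfold sinh. rewrite exp_Ropp.
  pose proof (exp_pos a).
  assert (/ exp a < 1). { rewrite <- Rinv_1. apply Rinv_lt_contravar; lra. }
  lra.
Qed.
Lemma cosh_gt1 a : 0 < a -> 1 < cosh a.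
Proof.
  intro H. pose proof (exp_gt1 a H). unfold cosh. rewrite exp_Ropp.
  pose proof (exp_pos a). set (e := exp a) in *.
  assert (e + / e - 2 = (e - 1) * (e - 1) / e) by (field; lra).
  assert (0 < (e - 1) * (e - 1) / e).
  { apply Rdiv_lt_0_compat; nra. }
  lra.
Qed.
Lemma cosh_pos a : 0 < cosh a.
Proof. unfold cosh. pose proof (exp_pos a). pose proof (exp_pos (-a)). lra. Qed.
Lemma exp_cs a : exp a = cosh a + sinh a.
Proof. unfold sinh, cosh. field. Qed.
Lemma div_nonpos a b : a <= 0 -> 0 < b -> a / b <= 0.
Proof. intros. unfold Rdiv. pose proof (Rinv_0_lt_compat b H0). nra. Qed.
Lemma div_neg a b : a < 0 -> 0 < b -> a / b < 0.
Proof. intros. unfold Rdiv. pose proof (Rinv_0_lt_compat b H0). nra. Qed.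
Lemma div_pos' a b : 0 < a -> 0 < b -> 0 < a / b.
Proof. intros. apply Rdiv_lt_0_compat; auto. Qed.

Lemma ellmin hm hp hn A B : 0 < A -> 0 < B -> hm <= hp -> hm <= hn -> hm <= 0 ->
  (hm * cosh A - hp) / sinh A + (hm * cosh B - hn) / sinh B <= 0.
Proof.
  intros. pose proof (cosh_gt1 A H). pose proof (cosh_gt1 B H0).
  pose proof (div_nonpos (hm * cosh A - hp) (sinh A) ltac:(nra) (sinh_pos A H)).
  pose proof (div_nonpos (hm * cosh B - hn) (sinh B) ltac:(nra) (sinh_pos B H0)).
  lra.
Qed.
Lemma ellmin_strict hm hp hn A B : 0 < A -> 0 < B -> hm <= hp -> hm <= hn -> hm < 0 ->
  (hm * cosh A - hp) / sinh A + (hm * cosh B - hn) / sinh B < 0.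
Proof.
  intros. pose proof (cosh_gt1 A H). pose proof (cosh_gt1 B H0).
  pose proof (div_neg (hm * cosh A - hp) (sinh A) ltac:(nra) (sinh_pos A H)).
  pose proof (div_neg (hm * cosh B - hn) (sinh B) ltac:(nra) (sinh_pos B H0)).
  lra.
Qed.
Lemma ellmax_strict hm hp hn A B : 0 < A -> 0 < B -> hp <= hm -> hn <= hm -> 0 < hm ->
  0 < (hm * cosh A - hp) / sinh A + (hm * cosh B - hn) / sinh B.
Proof.
  intros. pose proof (cosh_gt1 A H). pose proof (cosh_gt1 B H0).
  pose proof (div_pos' (hm * cosh A - hp) (sinh A) ltac:(nra) (sinh_pos A H)).
  pose proof (div_pos' (hm * cosh B - hn) (sinh B) ltac:(nra) (sinh_pos B H0)).
  lra.
Qed.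

Lemma rsum_ext n f g : (forall i, (i < n)%nat -> f i = g i) -> rsum n f = rsum n g.
Proof.
  induction n; intros H; simpl; auto.
  rewrite IHn by (intros; apply H; lia). rewrite H by lia. auto.
Qed.
Lemma rsum_plus n f g : rsum n (fun i => f i + g i) = rsum n f + rsum n g.
Proof. induction n; simpl; [lra|]. rewrite IHn. lra. Qed.
Lemma rsum_zero n f : (forall i, (i < n)%nat -> f i = 0) -> rsum n f = 0.
Proof.
  induction n; intros H; simpl; auto. rewrite IHn by (intros; apply H; lia).
  rewrite H by lia. lra.
Qed.
Lemma rsum_single n f k : (k < n)%nat -> (forall i, (i < n)%nat -> i <> k -> f i = 0) ->
  rsum n f = f k.
Proof.
  intros Hk H.
  rewrite (rsum_ext n f (fun i => (if Nat.eqb i k then f i else 0) + (if Nat.eqb i k then 0 else f i))).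
  2:{ intros. destruct (Nat.eqb_spec i k); lra. }
  rewrite rsum_plus. rewrite (rsum_zero n (fun i => if Nat.eqb i k then 0 else f i)).
  2:{ intros. destruct (Nat.eqb_spec i k); auto. }
  rewrite Rplus_0_r. clear H. induction n. lia.
  simpl. destruct (Nat.eqb_spec n k).
  - subst. rewrite rsum_zero. lra. intros. destruct (Nat.eqb_spec i k); [lia|auto].
  - rewrite IHn by lia. lra.
Qed.
Lemma rsum_split n f k : rsum n f =
  rsum n (fun i => if Nat.eqb i k then f i else 0) + rsum n (fun i => if Nat.eqb i k then 0 else f i).
Proof.
  rewrite <- rsum_plus. apply rsum_ext. intros. destruct (Nat.eqb_spec i k); lra.
Qed.
Lemma rsum_three n f a b c : (a < n)%nat -> (b < n)%nat -> (c < n)%nat ->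
  a <> b -> a <> c -> b <> c ->
  (forall i, (i < n)%nat -> i <> a -> i <> b -> i <> c -> f i = 0) ->
  rsum n f = f a + f b + f c.
Proof.
  intros.
  rewrite (rsum_ext n f (fun i => ((if Nat.eqb i a then f i else 0) + (if Nat.eqb i b then f i else 0))
     + ((if Nat.eqb i c then f i else 0) + (if Nat.eqb i a then 0 else if Nat.eqb i b then 0 else if Nat.eqb i c then 0 else f i)))).
  2:{ intros. destruct (Nat.eqb_spec i a), (Nat.eqb_spec i b), (Nat.eqb_spec i c); try lia; try lra.
      all: rewrite H5 by auto; lra. }
  rewrite !rsum_plus.
  rewrite (rsum_zero n (fun i => if Nat.eqb i a then 0 else if Nat.eqb i b then 0 else if Nat.eqb i c then 0 else f i)).
  2:{ intros. destruct (Nat.eqb_spec i a), (Nat.eqb_spec i b), (Nat.eqb_spec i c); auto. }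
  rewrite (rsum_single n _ a), (rsum_single n _ b), (rsum_single n _ c); auto.
  - rewrite !Nat.eqb_refl. lra.
  - intros. destruct (Nat.eqb_spec i c); auto; lia.
  - intros. destruct (Nat.eqb_spec i b); auto; lia.
  - intros. destruct (Nat.eqb_spec i a); auto; lia.
Qed.
Lemma rsum_lt n phi i j : (forall k, (k < n)%nat -> 0 < phi k) -> (i < j)%nat -> (j <= n)%nat ->
  rsum i phi < rsum j phi.
Proof.
  intros Hp Hij Hjn. induction j. lia. simpl.
  destruct (Nat.eq_dec i j).
  - subst. pose proof (Hp j ltac:(lia)). lra.
  - pose proof (IHj ltac:(lia) ltac:(lia)). pose proof (Hp j ltac:(lia)). lra.
Qed.

Lemma argmin f n : (0 < n)%nat -> exists m, (m < n)%nat /\ forall k, (k < n)%nat -> f m <= f k.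
Proof.
  induction n; intros. lia.
  destruct (Nat.eq_dec n 0). subst. exists 0%nat. split. lia. intros. replace k with 0%nat by lia. lra.
  destruct (IHn ltac:(lia)) as [m [Hm H1]].
  destruct (Rle_dec (f m) (f n)).
  - exists m. split. lia. intros. destruct (Nat.eq_dec k n). subst; auto. apply H1; lia.
  - exists n. split. lia. intros. destruct (Nat.eq_dec k n). subst; lra.
    pose proof (H1 k ltac:(lia)). lra.
Qed.
Lemma argmax f n : (0 < n)%nat -> exists m, (m < n)%nat /\ forall k, (k < n)%nat -> f k <= f m.
Proof.
  intros. destruct (argmin (fun i => - f i) n H) as [m [Hm H1]]. exists m. split; auto.
  intros. pose proof (H1 k H0). simpl in H2. lra.
Qed.

Lemma nxt_char n j : (j < n)%nat -> nxt n j = if Nat.eqb (j + 1) n then 0%nat else (j + 1)%nat.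
Proof.
  intros. unfold nxt. destruct (Nat.eqb_spec (j+1) n).
  - rewrite e. apply Nat.Div0.mod_same.
  - apply Nat.mod_small. lia.
Qed.
Lemma prv_char n j : (j < n)%nat -> prv n j = if Nat.eqb j 0 then (n - 1)%nat else (j - 1)%nat.
Proof.
  intros. unfold prv. destruct (Nat.eqb_spec j 0).
  - subst. apply Nat.mod_small. lia.
  - replace (j + n - 1)%nat with ((j - 1) + 1 * n)%nat by lia.
    rewrite Nat.Div0.mod_add. apply Nat.mod_small. lia.
Qed.
Ltac cyc n := repeat match goal with
  | H : context [nxt n ?j] |- _ => rewrite (nxt_char n j) in H by lia
  | H : context [prv n ?j] |- _ => rewrite (prv_char n j) in H by lia
  | |- context [nxt n ?j] => rewrite (nxt_char n j) by lia
  | |- context [prv n ?j] => rewrite (prv_char n j) by lia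
  | |- context [Nat.eqb ?a ?b] => destruct (Nat.eqb_spec a b)
  | H : context [Nat.eqb ?a ?b] |- _ => destruct (Nat.eqb_spec a b)
  end; try lia.
Lemma nxt_lt n j : (j < n)%nat -> (nxt n j < n)%nat.
Proof. intros. cyc n. Qed.
Lemma prv_lt n j : (j < n)%nat -> (prv n j < n)%nat.
Proof. intros. cyc n. Qed.
Lemma prv_nxt n j : (j < n)%nat -> prv n (nxt n j) = j.
Proof. intros. rewrite (nxt_char n j) by lia. destruct (Nat.eqb_spec (j+1) n); cyc n. Qed.
Lemma nxt_prv n j : (j < n)%nat -> nxt n (prv n j) = j.
Proof. intros. rewrite (prv_char n j) by lia. destruct (Nat.eqb_spec j 0); cyc n. Qed.
Lemma nxt_ne n j : (3 <= n)%nat -> (j < n)%nat -> nxt n j <> j.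
Proof. intros. cyc n. Qed.
Lemma prv_ne n j : (3 <= n)%nat -> (j < n)%nat -> prv n j <> j.
Proof. intros. cyc n. Qed.
Lemma nxt_prv_ne n j : (3 <= n)%nat -> (j < n)%nat -> nxt n j <> prv n j.
Proof. intros. cyc n. Qed.
Lemma nxt2_ne n j : (3 <= n)%nat -> (j < n)%nat -> nxt n (nxt n j) <> j.
Proof. intros. rewrite (nxt_char n j) by lia. destruct (Nat.eqb_spec (j+1) n); cyc n. Qed.
Lemma prv2_ne n j : (3 <= n)%nat -> (j < n)%nat -> prv n (prv n j) <> j.
Proof. intros. rewrite (prv_char n j) by lia. destruct (Nat.eqb_spec j 0); cyc n. Qed.

Definition nu (a : R) : R * R := (sinh a, cosh a).
Lemma boost_nu s a : boost s (nu a) = nu (s + a).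
Proof. unfold boost, nu; simpl. rewrite sinh_add, cosh_add. f_equal; ring. Qed.
Lemma eta_nu eta : in_H eta -> exists u, eta = nu u.
Proof.
  destruct eta as [a b]. unfold in_H, mink, nu; simpl. intros [H1 H2].
  assert (Hp : 0 < a + b) by nra.
  exists (ln (a + b)). unfold sinh, cosh. rewrite exp_Ropp, exp_ln by auto.
  assert (/ (a + b) = b - a). { field_simplify_eq; nra. }
  rewrite H. f_equal; field.
Qed.
Lemma fnormal_nu phi eta u i : eta = nu u -> fnormal phi eta i = nu (rsum i phi + u).
Proof. intros ->. unfold fnormal. apply boost_nu. Qed.
Lemma mink_shift x a d : mink x (nu (a + d)) =
  cosh d * mink x (nu a) + sinh d * (fst x * cosh a - snd x * sinh a).
Proof. unfold mink, nu; simpl. rewrite sinh_add, cosh_add. ring. Qed.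
Lemma pt_eq x y a : mink x (nu a) = mink y (nu a) ->
  fst x * cosh a - snd x * sinh a = fst y * cosh a - snd y * sinh a -> x = y.
Proof.
  destruct x as [x1 x2], y as [y1 y2]; unfold mink, nu; simpl. intros.
  pose proof (cosh_sinh a).
  assert (X1 : x1 - y1 = cosh a * ((x1*cosh a - x2*sinh a) - (y1*cosh a - y2*sinh a)) - sinh a * ((x1*sinh a - x2*cosh a) - (y1*sinh a - y2*cosh a))).
  { transitivity ((x1-y1)*(cosh a*cosh a - sinh a*sinh a)). rewrite H1; ring. ring. }
  assert (X2 : x2 - y2 = sinh a * ((x1*cosh a - x2*sinh a) - (y1*cosh a - y2*sinh a)) - cosh a * ((x1*sinh a - x2*cosh a) - (y1*sinh a - y2*cosh a))).
  { transitivity ((x2-y2)*(cosh a*cosh a - sinh a*sinh a)). rewrite H1; ring. ring. }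
  rewrite H, H0, Rminus_diag in X1, X2. f_equal; lra.
Qed.
Lemma nu_inj a b : nu a = nu b -> a = b.
Proof.
  unfold nu. intros H. injection H as H1 H2. apply exp_inv. rewrite !exp_cs. lra.
Qed.
Lemma mink_three x a A B :
  sinh B * mink x (nu (a - A)) + sinh A * mink x (nu (a + B)) = sinh (A + B) * mink x (nu a).
Proof.
  unfold Rminus. rewrite !mink_shift, sinh_add, cosh_opp, sinh_opp. ring.
Qed.

Definition II (n : nat) (J : Z) : nat := Z.to_nat (J mod Z.of_nat n).
Definition KK (n : nat) (J : Z) : Z := (J / Z.of_nat n)%Z.
Definition Th (n : nat) (t : R) (phi : nat -> R) (u : R) (J : Z) : R :=
  IZR (KK n J) * t + rsum (II n J) phi + u.

Lemma II_dec n J : (0 < n)%nat -> J = (Z.of_nat n * KK n J + Z.of_nat (II n J))%Z /\ (II n J < n)%nat.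
Proof.
  intros. unfold II, KK. assert (Z.of_nat n <> 0%Z) by lia.
  pose proof (Z.mod_pos_bound J (Z.of_nat n) ltac:(lia)).
  rewrite Z2Nat.id by lia. split. apply Z.div_mod; auto. lia.
Qed.
Lemma II_uniq n k i : (i < n)%nat ->
  KK n (Z.of_nat n * k + Z.of_nat i)%Z = k /\ II n (Z.of_nat n * k + Z.of_nat i)%Z = i.
Proof.
  intros. unfold KK, II. split.
  - symmetry. apply (Z.div_unique _ _ _ (Z.of_nat i)); lia.
  - rewrite <- (Z.mod_unique (Z.of_nat n * k + Z.of_nat i) (Z.of_nat n) k (Z.of_nat i)); lia.
Qed.
Lemma II_succ_case n J : (0 < n)%nat ->
  ((II n J + 1 < n)%nat /\ II n (J + 1) = (II n J + 1)%nat /\ KK n (J + 1) = KK n J) \/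
  ((II n J + 1 = n)%nat /\ II n (J + 1) = 0%nat /\ KK n (J + 1) = (KK n J + 1)%Z).
Proof.
  intros Hn. destruct (II_dec n J Hn) as [HJ Hi].
  destruct (Nat.lt_ge_cases (II n J + 1) n).
  - left. split; auto.
    assert (J + 1 = Z.of_nat n * KK n J + Z.of_nat (II n J + 1))%Z by lia.
    rewrite H0. destruct (II_uniq n (KK n J) (II n J + 1) H). auto.
  - right. split. lia.
    assert (J + 1 = Z.of_nat n * (KK n J + 1) + Z.of_nat 0)%Z by lia.
    rewrite H0. destruct (II_uniq n (KK n J + 1) 0 Hn). auto.
Qed.
Lemma II_lt n J : (0 < n)%nat -> (II n J < n)%nat.
Proof. intros. apply II_dec; auto. Qed.
Lemma II_succ n J : (0 < n)%nat -> II n (J + 1) = nxt n (II n J).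
Proof.
  intros. pose proof (II_lt n J H). rewrite nxt_char by auto.
  destruct (II_succ_case n J H) as [[A [B C]]|[A [B C]]]; rewrite B;
  destruct (Nat.eqb_spec (II n J + 1) n); lia.
Qed.
Lemma II_pred n J : (0 < n)%nat -> II n (J - 1) = prv n (II n J).
Proof.
  intros. replace J with (J - 1 + 1)%Z at 2 by lia. rewrite II_succ by auto.
  rewrite prv_nxt; auto. apply II_lt; auto.
Qed.
Lemma Th_succ n t phi u J : (0 < n)%nat -> rsum n phi = t ->
  Th n t phi u (J + 1) = Th n t phi u J + phi (II n J).
Proof.
  intros Hn Ht. unfold Th.
  destruct (II_succ_case n J Hn) as [[A [B C]]|[A [B C]]]; rewrite B, C.
  - replace (II n J + 1)%nat with (S (II n J)) by lia. simpl. ring.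
  - rewrite plus_IZR. simpl.
    assert (E : rsum n phi = rsum (II n J) phi + phi (II n J)).
    { replace n with (S (II n J)) at 1 by lia. reflexivity. }
    rewrite <- Ht, E. ring.
Qed.
Lemma Th_pred n t phi u J : (0 < n)%nat -> rsum n phi = t ->
  Th n t phi u (J - 1) = Th n t phi u J - phi (prv n (II n J)).
Proof.
  intros. rewrite <- II_pred by auto.
  replace J with (J - 1 + 1)%Z at 2 by lia. rewrite Th_succ by auto. ring.
Qed.
Lemma Th_at n t phi u k i : (i < n)%nat ->
  Th n t phi u (Z.of_nat n * k + Z.of_nat i)%Z = IZR k * t + (rsum i phi + u) /\
  II n (Z.of_nat n * k + Z.of_nat i)%Z = i.
Proof.
  intros. destruct (II_uniq n k i H). unfold Th. rewrite H0, H1. split; auto. ring.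
Qed.

Lemma conv_fwd (P L c : Z -> R) a :
  (forall J, 0 < P J) -> (forall J, 0 < L J) ->
  (forall J, sinh (P J) * c (J - 1)%Z + sinh (P (J - 1)%Z) * c (J + 1)%Z
             - sinh (P (J - 1)%Z + P J) * c J = L J * sinh (P (J - 1)%Z) * sinh (P J)) ->
  c a = 0 -> c (a + 1)%Z = 0 ->
  forall m : nat, 0 <= c (a + 1 + Z.of_nat m)%Z /\
     0 < (c (a + 1 + Z.of_nat m + 1)%Z - c (a + 1 + Z.of_nat m)%Z * cosh (P (a + 1 + Z.of_nat m)%Z)) / sinh (P (a + 1 + Z.of_nat m)%Z).
Proof.
  intros HP HL Hrec H0 H1 m. induction m.
  - simpl. rewrite Z.add_0_r, H1. split. lra.
    pose proof (Hrec (a + 1)%Z). replace (a + 1 - 1)%Z with a in H by lia. rewrite H0, H1 in H.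
    pose proof (sinh_pos _ (HP a)). pose proof (sinh_pos _ (HP (a+1)%Z)).
    pose proof (HL (a+1)%Z).
    assert (c (a + 1 + 1)%Z = L (a + 1)%Z * sinh (P (a + 1)%Z)).
    { apply (Rmult_eq_reg_l (sinh (P a))). lra. lra. }
    rewrite H5. apply div_pos'; nra.
  - destruct IHm as [Hc Hp].
    set (J := (a + 1 + Z.of_nat m)%Z) in *.
    replace (a + 1 + Z.of_nat (S m))%Z with (J + 1)%Z by lia.
    pose proof (Hrec (J + 1)%Z). replace (J + 1 - 1)%Z with J in H by lia.
    set (A := P J) in *. set (B := P (J+1)%Z) in *.
    set (x := c J) in *. set (y := c (J + 1)%Z) in *. set (z := c (J + 1 + 1)%Z) in *.
    pose proof (sinh_pos _ (HP J)). pose proof (sinh_pos _ (HP (J+1)%Z)).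
    pose proof (HL (J+1)%Z). pose proof (cosh_pos A). pose proof (cosh_sinh A).
    fold A in H2. fold B in H3. rewrite sinh_add in H.
    set (p := (y - x * cosh A) / sinh A) in *.
    assert (Hy : y = x * cosh A + p * sinh A). { unfold p. field. lra. }
    split.
    + pose proof (cosh_pos A). nra.
    + assert (Hz : z - y * cosh B = sinh B * (L (J + 1)%Z + (cosh A * y - x) / sinh A)).
      { apply (Rmult_eq_reg_l (sinh A)). 2: lra. field_simplify. 2: lra.
        rewrite Rmult_comm with (r1 := sinh A). nra. }
      rewrite Hz.
      replace (sinh B * (L (J + 1)%Z + (cosh A * y - x) / sinh A) / sinh B)
        with (L (J + 1)%Z + (cosh A * y - x) / sinh A) by (field; lra).
      assert (cosh A * y - x = x * sinh A * sinh A + p * sinh A * cosh A) by nra.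
      assert (0 < (cosh A * y - x) / sinh A).
      { apply div_pos'. 2: lra. rewrite H7. pose proof (Rmult_lt_0_compat _ _ Hp H2).
        pose proof (Rmult_lt_0_compat _ _ H8 H5). nra. }
      lra.
Qed.

Lemma conv_all (P L c : Z -> R) a :
  (forall J, 0 < P J) -> (forall J, 0 < L J) ->
  (forall J, sinh (P J) * c (J - 1)%Z + sinh (P (J - 1)%Z) * c (J + 1)%Z
             - sinh (P (J - 1)%Z + P J) * c J = L J * sinh (P (J - 1)%Z) * sinh (P J)) ->
  c a = 0 -> c (a + 1)%Z = 0 -> forall J, 0 <= c J.
Proof.
  intros HP HL Hrec H0 H1 J.
  destruct (Z_le_gt_dec (a + 1) J).
  - destruct (conv_fwd P L c a HP HL Hrec H0 H1 (Z.to_nat (J - a - 1))) as [H _].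
    rewrite Z2Nat.id in H by lia. replace (a + 1 + (J - a - 1))%Z with J in H by lia. auto.
  - set (b := (2 * a + 1)%Z).
    assert (Hrec' : forall J, sinh (P (b - J - 1)%Z) * c (b - (J - 1))%Z + sinh (P (b - (J - 1) - 1)%Z) * c (b - (J + 1))%Z
             - sinh (P (b - (J - 1) - 1)%Z + P (b - J - 1)%Z) * c (b - J)%Z = L (b - J)%Z * sinh (P (b - (J - 1) - 1)%Z) * sinh (P (b - J - 1)%Z)).
    { intros K. pose proof (Hrec (b - K)%Z) as E.
      replace (b - (K - 1) - 1)%Z with (b - K)%Z by lia.
      replace (b - (K - 1))%Z with (b - K + 1)%Z by lia.
      replace (b - (K + 1))%Z with (b - K - 1)%Z by lia.
      replace (b - K - 1)%Z with (b - K - 1)%Z in E by lia.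
      rewrite (Rplus_comm (P (b - K)%Z)).
      transitivity (L (b-K)%Z * sinh (P (b-K-1)%Z) * sinh (P (b-K)%Z)); [rewrite <- E; ring | ring]. }
    assert (E0 : c (b - a)%Z = 0). { unfold b. replace (2 * a + 1 - a)%Z with (a + 1)%Z by lia. auto. }
    assert (E1 : c (b - (a + 1))%Z = 0). { unfold b. replace (2 * a + 1 - (a + 1))%Z with a by lia. auto. }
    destruct (conv_fwd (fun J => P (b - J - 1)%Z) (fun J => L (b - J)%Z) (fun J => c (b - J)%Z) a
      (fun J => HP _) (fun J => HL _) Hrec' E0 E1 (Z.to_nat (a - J))) as [H _].
    rewrite Z2Nat.id in H by lia. unfold b in H.
    replace (2 * a + 1 - (a + 1 + (a - J)))%Z with J in H by lia. auto.
Qed.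

Lemma le_div s S X : 0 < S -> s * S <= X -> s <= X / S.
Proof.
  intros. apply (Rmult_le_reg_r S); auto. unfold Rdiv. rewrite Rmult_assoc, Rinv_l by lra. lra.
Qed.

Lemma tpoly_J n t phi eta u h x : (0 < n)%nat -> eta = nu u ->
  tpolygon n t phi eta h x -> forall J, mink x (nu (Th n t phi u J)) <= - h (II n J).
Proof.
  intros Hn He H J. pose proof (H (KK n J) (II n J) (II_lt n J Hn)) as H1.
  rewrite (fnormal_nu phi eta u) in H1 by auto. rewrite boost_nu in H1.
  unfold Th. replace (IZR (KK n J) * t + rsum (II n J) phi + u) with
     (IZR (KK n J) * t + (rsum (II n J) phi + u)) by ring. auto.
Qed.
Lemma J_tpoly n t phi eta u h x : eta = nu u ->
  (forall J, mink x (nu (Th n t phi u J)) <= - h (II n J)) -> tpolygon n t phi eta h x.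
Proof.
  intros He H k i Hi. rewrite (fnormal_nu phi eta u) by auto. rewrite boost_nu.
  destruct (Th_at n t phi u k i Hi) as [E1 E2].
  pose proof (H (Z.of_nat n * k + Z.of_nat i)%Z). rewrite E1, E2 in H0. auto.
Qed.

Lemma in_poly n t phi eta u h x a : (3 <= n)%nat -> (forall i, (i < n)%nat -> 0 < phi i) ->
  rsum n phi = t -> eta = nu u ->
  (forall k, (k < n)%nat -> 0 < ell n phi k h) ->
  - mink x (nu (Th n t phi u a)) - h (II n a) = 0 ->
  - mink x (nu (Th n t phi u (a + 1)%Z)) - h (II n (a + 1)%Z) = 0 ->
  tpolygon n t phi eta h x.
Proof.
  intros Hn Hphi Ht He Hl Ha Ha1. apply (J_tpoly n t phi eta u); auto.
  assert (Hn0 : (0 < n)%nat) by lia.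
  pose proof (conv_all (fun J => phi (II n J)) (fun J => ell n phi (II n J) h)
    (fun J => - mink x (nu (Th n t phi u J)) - h (II n J)) a
    (fun J => Hphi _ (II_lt n J Hn0)) (fun J => Hl _ (II_lt n J Hn0))) as C.
  intros J. cut (0 <= - mink x (nu (Th n t phi u J)) - h (II n J)). lra.
  apply C; auto. clear J. intros J. simpl.
  rewrite II_pred, II_succ by auto. rewrite Th_pred, Th_succ by auto.
  set (r := II n J). set (A := phi (prv n r)). set (B := phi r). set (th := Th n t phi u J).
  pose proof (mink_three x th A B) as M.
  assert (sA : 0 < sinh A) by (apply sinh_pos, Hphi, prv_lt, II_lt; auto).
  assert (sB : 0 < sinh B) by (apply sinh_pos, Hphi, II_lt; auto).
  transitivity (-(sinh B * mink x (nu (th - A)) + sinh A * mink x (nu (th + B))) + sinh (A+B) * mink x (nu th)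
     - (sinh B * h (prv n r) + sinh A * h (nxt n r) - sinh (A+B) * h r)). ring.
  rewrite M. unfold ell. fold A B. rewrite sinh_add. field. lra.
Qed.

Lemma line_constr n t phi eta u h x j : (3 <= n)%nat -> rsum n phi = t -> eta = nu u -> (j < n)%nat ->
  tpolygon n t phi eta h x -> mink x (nu (rsum j phi + u)) = - h j ->
  let th := rsum j phi + u in
  let s := fst x * cosh th - snd x * sinh th in
  - h j * cosh (phi j) + s * sinh (phi j) <= - h (nxt n j) /\
  - h j * cosh (phi (prv n j)) - s * sinh (phi (prv n j)) <= - h (prv n j).
Proof.
  intros Hn Ht He Hj HK Hl th s.
  assert (Hn0 : (0 < n)%nat) by lia.
  destruct (Th_at n t phi u 0 j Hj) as [E1 E2].
  set (J0 := (Z.of_nat n * 0 + Z.of_nat j)%Z) in *.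
  rewrite Rmult_0_l, Rplus_0_l in E1.
  pose proof (tpoly_J n t phi eta u h x Hn0 He HK (J0 + 1)%Z) as C1.
  pose proof (tpoly_J n t phi eta u h x Hn0 He HK (J0 - 1)%Z) as C2.
  rewrite Th_succ, II_succ, E1, E2 in C1 by auto.
  rewrite Th_pred, II_pred, E1, E2 in C2 by auto.
  rewrite mink_shift in C1. unfold Rminus in C2. rewrite mink_shift, cosh_opp, sinh_opp in C2.
  rewrite Hl in C1, C2. unfold s, th. split; nra.
Qed.

Lemma genuine_ell n t phi eta u h j : (3 <= n)%nat -> (forall i, (i < n)%nat -> 0 < phi i) ->
  rsum n phi = t -> eta = nu u -> (j < n)%nat ->
  genuine_edge (tpolygon n t phi eta h) (fnormal phi eta j) (h j) -> 0 < ell n phi j h.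
Proof.
  intros Hn Hphi Ht He Hj [x [y [Hxy [Kx [Ky [Lx Ly]]]]]].
  rewrite (fnormal_nu phi eta u) in Lx, Ly by auto.
  pose proof (line_constr n t phi eta u h x j Hn Ht He Hj Kx Lx) as [X1 X2].
  pose proof (line_constr n t phi eta u h y j Hn Ht He Hj Ky Ly) as [Y1 Y2].
  set (th := rsum j phi + u) in *.
  set (sx := fst x * cosh th - snd x * sinh th) in *.
  set (sy := fst y * cosh th - snd y * sinh th) in *.
  assert (Hs : sx <> sy). { intro E. apply Hxy. apply (pt_eq x y th). lra. exact E. }
  assert (sA : 0 < sinh (phi (prv n j))) by (apply sinh_pos, Hphi, prv_lt; auto).
  assert (sB : 0 < sinh (phi j)) by (apply sinh_pos, Hphi; auto).
  unfold ell.
  assert (forall s, - h j * cosh (phi j) + s * sinh (phi j) <= - h (nxt n j) ->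
     s <= (h j * cosh (phi j) - h (nxt n j)) / sinh (phi j)) as Ub.
  { intros. apply le_div; auto. lra. }
  assert (forall s, - h j * cosh (phi (prv n j)) - s * sinh (phi (prv n j)) <= - h (prv n j) ->
     - s <= (h j * cosh (phi (prv n j)) - h (prv n j)) / sinh (phi (prv n j))) as Lb.
  { intros. apply le_div; auto. lra. }
  pose proof (Ub _ X1). pose proof (Ub _ Y1). pose proof (Lb _ X2). pose proof (Lb _ Y2).
  destruct (Rtotal_order sx sy) as [L|[L|L]]; [lra|contradiction|lra].
Qed.

Lemma ell_genuine n t phi eta u h j : (3 <= n)%nat -> (forall i, (i < n)%nat -> 0 < phi i) ->
  rsum n phi = t -> eta = nu u -> (j < n)%nat ->
  (forall k, (k < n)%nat -> 0 < ell n phi k h) ->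
  genuine_edge (tpolygon n t phi eta h) (fnormal phi eta j) (h j).
Proof.
  intros Hn Hphi Ht He Hj Hl.
  assert (Hn0 : (0 < n)%nat) by lia.
  rewrite (fnormal_nu phi eta u) by auto.
  set (th := rsum j phi + u).
  set (P := fun s => (s * cosh th + h j * sinh th, s * sinh th + h j * cosh th)).
  assert (PS : forall s, fst (P s) * cosh th - snd (P s) * sinh th = s).
  { intros. unfold P; simpl. transitivity (s * (cosh th * cosh th - sinh th * sinh th)). ring.
    rewrite cosh_sinh. ring. }
  assert (PM : forall s, mink (P s) (nu th) = - h j).
  { intros. unfold P, mink, nu; simpl. transitivity (- h j * (cosh th * cosh th - sinh th * sinh th)). ring.
    rewrite cosh_sinh. ring. }
  assert (PD : forall s d, mink (P s) (nu (th + d)) = - h j * cosh d + s * sinh d).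
  { intros. rewrite mink_shift, PM, PS. ring. }
  destruct (Th_at n t phi u 0 j Hj) as [E1 E2].
  set (J0 := (Z.of_nat n * 0 + Z.of_nat j)%Z) in *.
  rewrite Rmult_0_l, Rplus_0_l in E1. fold th in E1.
  set (A := phi (prv n j)). set (B := phi j).
  assert (sA : 0 < sinh A) by (apply sinh_pos, Hphi, prv_lt; auto).
  assert (sB : 0 < sinh B) by (apply sinh_pos, Hphi; auto).
  set (a := (h j * cosh A - h (prv n j)) / sinh A).
  set (b := (h j * cosh B - h (nxt n j)) / sinh B).
  assert (Hab : 0 < a + b) by (apply (Hl j Hj)).
  exists (P b), (P (- a)). split; [|split; [|split; [|split]]].
  - intro E. pose proof (PS b). rewrite E, PS in H. lra.
  - apply (in_poly n t phi eta u h (P b) J0); auto.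
    + rewrite E1, E2, PM. ring.
    + rewrite Th_succ, II_succ, E1, E2, PD by auto. fold B. unfold b. field. lra.
  - apply (in_poly n t phi eta u h (P (- a)) (J0 - 1)%Z); auto.
    + rewrite Th_pred, II_pred, E1, E2 by auto. unfold Rminus. rewrite PD, cosh_opp, sinh_opp.
      fold A. unfold a. field. lra.
    + replace (J0 - 1 + 1)%Z with J0 by lia. rewrite E1, E2, PM. ring.
  - apply PM.
  - apply PM.
Qed.

Lemma dv A B C : 0 < A -> 0 < B -> 0 < C ->
  let v := sqrt (sinh A * sinh C / (sinh (A + B) * sinh (B + C))) in
  (- (-2 / sinh B) / sqrt (2 * (cosh A / sinh A + cosh B / sinh B) * (2 * (cosh B / sinh B + cosh C / sinh C))) = v) /\ 0 < v < 1.
Proof.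
  intros HA HB HC v.
  pose proof (sinh_pos A HA). pose proof (sinh_pos B HB). pose proof (sinh_pos C HC).
  pose proof (cosh_gt1 A HA). pose proof (cosh_gt1 B HB). pose proof (cosh_gt1 C HC).
  assert (S1 : sinh A < sinh (A + B)). { rewrite sinh_add. nra. }
  assert (S2 : sinh C < sinh (B + C)). { rewrite sinh_add. nra. }
  set (Q := 2 * (cosh A / sinh A + cosh B / sinh B) * (2 * (cosh B / sinh B + cosh C / sinh C))).
  assert (HQ : Q = 4 * sinh (A + B) * sinh (B + C) / (sinh A * sinh B * sinh B * sinh C)).
  { unfold Q. rewrite !sinh_add. field. repeat split; lra. }
  assert (Qp : 0 < Q). { rewrite HQ. apply div_pos'. nra.
    assert (0 < sinh A * sinh B) by nra. assert (0 < sinh A * sinh B * sinh B) by nra. nra. }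
  set (R0 := sinh A * sinh C / (sinh (A + B) * sinh (B + C))).
  assert (R0p : 0 < R0). { apply div_pos'; nra. }
  assert (R1 : R0 < 1). { unfold R0. apply (Rmult_lt_reg_r (sinh (A + B) * sinh (B + C))). nra.
    unfold Rdiv. rewrite Rmult_assoc, Rinv_l by nra. nra. }
  pose proof (sqrt_lt_R0 Q Qp) as sQ. pose proof (sqrt_sqrt Q ltac:(lra)) as sQQ.
  pose proof (sqrt_lt_R0 R0 R0p) as sR. pose proof (sqrt_sqrt R0 ltac:(lra)) as sRR.
  unfold v; fold R0.
  split; [|split; [lra| nra]].
  apply Rsqr_inj.
  - apply Rlt_le. apply div_pos'; auto. replace (- (-2 / sinh B)) with (2 / sinh B) by (field; lra).
    apply div_pos'; lra.
  - lra.
  - unfold Rsqr. rewrite sRR.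
    transitivity ((2 / sinh B) * (2 / sinh B) / (sqrt Q * sqrt Q)). field. split; lra.
    rewrite sQQ, HQ. unfold R0. rewrite !sinh_add. field. repeat split; nra.
Qed.

Definition ee (j : nat) : nat -> R := fun i => if Nat.eqb i j then 2 else 0.

Lemma ell_ee_same n phi k : (3 <= n)%nat -> (k < n)%nat ->
  ell n phi k (ee k) = 2 * (cosh (phi (prv n k)) / sinh (phi (prv n k)) + cosh (phi k) / sinh (phi k)).
Proof.
  intros. unfold ell, ee. rewrite Nat.eqb_refl.
  destruct (Nat.eqb_spec (prv n k) k). exfalso; apply (prv_ne n k); auto.
  destruct (Nat.eqb_spec (nxt n k) k). exfalso; apply (nxt_ne n k); auto.
  unfold Rdiv. ring.
Qed.
Lemma ell_ee_nxt n phi k : (3 <= n)%nat -> (k < n)%nat ->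
  ell n phi k (ee (nxt n k)) = - 2 / sinh (phi k).
Proof.
  intros. unfold ell, ee. rewrite Nat.eqb_refl.
  destruct (Nat.eqb_spec k (nxt n k)). exfalso; apply (nxt_ne n k); auto.
  destruct (Nat.eqb_spec (prv n k) (nxt n k)). exfalso; apply (nxt_prv_ne n k); auto.
  unfold Rdiv. ring.
Qed.
Lemma ell_ee_prv n phi k : (3 <= n)%nat -> (k < n)%nat ->
  ell n phi k (ee (prv n k)) = - 2 / sinh (phi (prv n k)).
Proof.
  intros. unfold ell, ee. rewrite Nat.eqb_refl.
  destruct (Nat.eqb_spec k (prv n k)). exfalso; apply (prv_ne n k); auto.
  destruct (Nat.eqb_spec (nxt n k) (prv n k)). exfalso; apply (nxt_prv_ne n k); auto.
  unfold Rdiv. ring.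
Qed.
Lemma ell_ee_far n phi k j : (k < n)%nat ->
  j <> k -> j <> nxt n k -> j <> prv n k -> ell n phi k (ee j) = 0.
Proof.
  intros. unfold ell, ee.
  destruct (Nat.eqb_spec k j); [lia|]. destruct (Nat.eqb_spec (prv n k) j); [congruence|].
  destruct (Nat.eqb_spec (nxt n k) j); [congruence|]. unfold Rdiv. ring.
Qed.

Lemma coarea_ee n phi k x : (k < n)%nat -> coarea n phi (ee k) x = ell n phi k x.
Proof.
  intros. unfold coarea. rewrite (rsum_single n _ k H).
  - unfold ee, ell. rewrite Nat.eqb_refl. change (if true then 2 else 0) with 2.
    set (a := (x k * cosh (phi (prv n k)) - x (prv n k)) / sinh (phi (prv n k))).
    set (b := (x k * cosh (phi k) - x (nxt n k)) / sinh (phi k)). field.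
  - intros. unfold ee. destruct (Nat.eqb_spec i k); [lia|]. ring.
Qed.

Lemma sum_ee n phi c j : (3 <= n)%nat -> (j < n)%nat ->
  rsum n (fun k => c k * ell n phi k (ee j)) = 2 * ell n phi j c.
Proof.
  intros Hn Hj.
  rewrite (rsum_three n _ j (nxt n j) (prv n j)).
  - rewrite ell_ee_same by auto.
    pose proof (ell_ee_prv n phi (nxt n j) Hn (nxt_lt n j Hj)) as E1. rewrite prv_nxt in E1 by auto.
    pose proof (ell_ee_nxt n phi (prv n j) Hn (prv_lt n j Hj)) as E2. rewrite nxt_prv in E2 by auto.
    rewrite E1, E2.
    unfold ell.
    set (a := sinh (phi (prv n j))). set (b := sinh (phi j)). unfold Rdiv. ring.
  - auto.
  - apply nxt_lt; auto.
  - apply prv_lt; auto.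
  - intro E. apply (nxt_ne n j); auto.
  - intro E. apply (prv_ne n j); auto.
  - apply nxt_prv_ne; auto.
  - intros i Hi H1 H2 H3. rewrite ell_ee_far; auto. ring.
    + intro E. subst. apply H3. rewrite prv_nxt; auto.
    + intro E. subst. apply H2. rewrite nxt_prv; auto.
Qed.

Lemma h_pos n phi h : (3 <= n)%nat -> (forall i, (i < n)%nat -> 0 < phi i) ->
  (forall k, (k < n)%nat -> 0 < ell n phi k h) -> forall i, (i < n)%nat -> 0 < h i.
Proof.
  intros Hn Hphi Hl i Hi. destruct (argmin h n ltac:(lia)) as [m [Hm Hmin]].
  cut (0 < h m). { intros. pose proof (Hmin i Hi). lra. }
  destruct (Rlt_le_dec 0 (h m)); auto. exfalso.
  pose proof (Hl m Hm). unfold ell in H.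
  pose proof (ellmin (h m) (h (prv n m)) (h (nxt n m)) (phi (prv n m)) (phi m)
    (Hphi _ (prv_lt n m Hm)) (Hphi _ Hm) (Hmin _ (prv_lt n m Hm)) (Hmin _ (nxt_lt n m Hm)) r).
  lra.
Qed.

Lemma lin_indep n phi : (3 <= n)%nat -> (forall i, (i < n)%nat -> 0 < phi i) ->
  lin_indep_forms n (ell n phi).
Proof.
  intros Hn Hphi c Hc.
  assert (Z : forall j, (j < n)%nat -> ell n phi j c = 0).
  { intros j Hj. pose proof (Hc (ee j)). rewrite sum_ee in H by auto. lra. }
  destruct (argmin c n ltac:(lia)) as [m [Hm Hmin]].
  destruct (argmax c n ltac:(lia)) as [M [HM Hmax]].
  assert (0 <= c m).
  { destruct (Rlt_le_dec (c m) 0); auto. exfalso.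
    pose proof (ellmin_strict (c m) (c (prv n m)) (c (nxt n m)) (phi (prv n m)) (phi m)
      (Hphi _ (prv_lt n m Hm)) (Hphi _ Hm) (Hmin _ (prv_lt n m Hm)) (Hmin _ (nxt_lt n m Hm)) r).
    pose proof (Z m Hm). unfold ell in H0. lra. }
  assert (c M <= 0).
  { destruct (Rlt_le_dec 0 (c M)); auto. exfalso.
    pose proof (ellmax_strict (c M) (c (prv n M)) (c (nxt n M)) (phi (prv n M)) (phi M)
      (Hphi _ (prv_lt n M HM)) (Hphi _ HM) (Hmax _ (prv_lt n M HM)) (Hmax _ (nxt_lt n M HM)) r).
    pose proof (Z M HM). unfold ell in H1. lra. }
  intros k Hk. pose proof (Hmin k Hk). pose proof (Hmax k Hk). lra.
Qed.

Lemma support_iff n t phi eta u h : (3 <= n)%nat -> (forall i, (i < n)%nat -> 0 < phi i) ->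
  rsum n phi = t -> eta = nu u ->
  support_cone n t phi eta h <-> (forall k, (k < n)%nat -> 0 < ell n phi k h).
Proof.
  intros Hn Hphi Ht He. split.
  - intros [_ [_ G]] k Hk. apply (genuine_ell n t phi eta u); auto.
  - intros Hl. split; [|split].
    + intros i j Hi Hj Hij E. rewrite !(fnormal_nu phi eta u) in E by auto.
      apply nu_inj in E.
      destruct (proj1 (Nat.lt_gt_cases i j) Hij) as [L|L].
      * pose proof (rsum_lt n phi i j Hphi L ltac:(lia)). lra.
      * pose proof (rsum_lt n phi j i Hphi L ltac:(lia)). lra.
    + apply (h_pos n phi); auto.
    + intros i Hi. apply (ell_genuine n t phi eta u); auto.
Qed.

Theorem mainTheorem5 (n : nat) (t : R) (phi : nat -> R) (eta : R * R) :
  0 < t -> (3 <= n)%nat ->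
  (forall i, (i < n)%nat -> 0 < phi i) ->
  rsum n phi = t ->
  in_H eta ->
  exists eps : nat -> R,
    spherical_simplex_facets n (coarea n phi) (sphere_part n t phi eta)
      (ell n phi) eps /\
    exists N : nat -> nat -> R,
      (forall k, (k < n)%nat -> inward_normal (coarea n phi) (ell n phi k) (eps k) (N k)) /\
      (forall k, (k < n)%nat ->
         exists alpha : R, 0 < alpha < PI / 2 /\
           cos alpha = dihedral_cos (coarea n phi) (N k) (N (nxt n k)) /\
           cos alpha = sqrt (sinh (phi (prv n k)) * sinh (phi (nxt n k)) /
                  (sinh (phi (prv n k) + phi k) * sinh (phi k + phi (nxt n k))))) /\
      (forall k j, (k < n)%nat -> (j < n)%nat ->
         j <> k -> j <> nxt n k -> j <> prv n k ->
         coarea n phi (N k) (N j) = 0).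
Proof.
  intros Ht0 Hn Hphi Ht Heta.
  destruct (eta_nu eta Heta) as [u He].
  exists (fun _ => 1). split; [split; [|split]|].
  - apply lin_indep; auto.
  - intros. left; auto.
  - intros h. unfold sphere_part. rewrite (support_iff n t phi eta u h) by auto.
    split; intros [A B]; split; auto; intros k Hk.
    + specialize (A k Hk); lra.
    + specialize (B k Hk); lra.
  - exists ee. split; [|split].
    + intros k Hk x. rewrite coarea_ee by auto. ring.
    + intros k Hk.
      pose proof (prv_lt n k Hk) as Hp. pose proof (nxt_lt n k Hk) as Hx.
      destruct (dv (phi (prv n k)) (phi k) (phi (nxt n k)) (Hphi _ Hp) (Hphi _ Hk) (Hphi _ Hx))
        as [D [V0 V1]].
      set (v := sqrt (sinh (phi (prv n k)) * sinh (phi (nxt n k)) /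
                  (sinh (phi (prv n k) + phi k) * sinh (phi k + phi (nxt n k))))) in *.
      assert (Dv : dihedral_cos (coarea n phi) (ee k) (ee (nxt n k)) = v).
      { unfold dihedral_cos. rewrite !coarea_ee by auto.
        rewrite ell_ee_nxt, ell_ee_same, ell_ee_same by auto. rewrite prv_nxt by auto.
        exact D. }
      exists (acos v). rewrite Dv. rewrite cos_acos by lra.
      split; [|split; auto].
      pose proof (acos_bound v). pose proof PI_RGT_0.
      split.
      * destruct (Req_dec (acos v) 0) as [E|E]. 2: lra.
        exfalso. pose proof (cos_acos v ltac:(lra)). rewrite E, cos_0 in H1. lra.
      * destruct (Rlt_le_dec (acos v) (PI / 2)); auto. exfalso.
        pose proof (cos_le_0 (acos v) r ltac:(lra)). rewrite cos_acos in H1 by lra. lra.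
    + intros k j Hk Hj H1 H2 H3. rewrite coarea_ee by auto. apply ell_ee_far; auto.
Qed.
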